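(* Let $G$ be an almost well-covered graph of girth at least $6$. Then no vertex of $G_2$ is adjacent to a vertex of $G_0$.
   Context: All graphs are finite and simple. The girth is the length of a shortest cycle (infinite for acyclic graphs). For a graph $G$, $\alpha(G)$ is the maximum size of an independent set and $i(G)$ the minimum size of an inclusion-maximal independent set; $G$ is almost well-covered if $\alpha(G)-i(G)=1$. Types of vertices: let $U$ be the set of vertices of $G$ whose connected component is a complete graph. In $G-U$, vertices of degree $1$ are leaves and the others are internal vertices. An internal vertex adjacent to exactly $k$ leaves is of type $k$; every vertex of $U$ is of type $0$. $G_i$ denotes the subgraph of $G$ induced by all vertices of type $i$. *)

(* Defs.v *)
From mathcomp Require Import all_boot.
Set Implicit Arguments. Unset Strict Implicit. Unset Printing Implicit Defensive.

Section Graph.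
Variables (T : finType) (e : rel T).

Definition simple_graph : Prop := symmetric e /\ irreflexive e.

(* girth >= k: every cycle (>= 3 distinct vertices, consecutive ones adjacent,
   last adjacent to first) has length >= k. Acyclic graphs satisfy it. *)
Definition girth_ge (k : nat) : Prop :=
  forall s : seq T, uniq s -> 3 <= size s -> cycle e s -> k <= size s.

Definition independent (A : {set T}) : bool :=
  [forall x in A, forall y in A, ~~ e x y].

Definition maximal_independent (A : {set T}) : bool :=
  independent A && [forall x, (x \notin A) ==> ~~ independent (x |: A)].

Definition alpha : nat := \max_(A : {set T} | independent A) #|A|.

(* i(G): minimum size of an inclusion-maximal independent set
   (one always exists; #|T| is just the neutral element of the min) *)
Definition indep_domination : nat :=
  \big[minn/#|T|]_(A : {set T} | maximal_independent A) #|A|.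

Definition almost_well_covered : Prop := alpha = (indep_domination + 1)%N.

Definition in_U (x : T) : bool :=
  [forall y, forall z, (connect e x y && connect e x z && (y != z)) ==> e y z].

Definition degGU (x : T) : nat := #|[set y | e x y & ~~ in_U y]|.

Definition leaf (x : T) : bool := ~~ in_U x && (degGU x == 1).
Definition internal (x : T) : bool := ~~ in_U x && (degGU x != 1).

Definition of_type (k : nat) (x : T) : bool :=
  (in_U x && (k == 0)) || (internal x && (#|[set y | e x y & leaf y]| == k)).

End Graph.

(* Main.v *)
Require Import Defs.
From mathcomp Require Import all_boot.
From mathcomp Require Import zify.
Set Implicit Arguments. Unset Strict Implicit. Unset Printing Implicit Defensive.

Section Helpers.
Variables (T : finType) (e : rel T).

Lemma U_edge u v : e u v -> in_U e u -> in_U e v.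
Proof.
move=> euv /forallP H; apply/forallP => y; apply/forallP => z.
apply/implyP => /andP[/andP[cy cz] nyz].
move: (forallP (H y) z) => /implyP; apply; rewrite nyz andbT.
by apply/andP; split; apply: connect_trans (connect1 euv) _.
Qed.

Lemma indepP (A : {set T}) :
  reflect (forall x y, x \in A -> y \in A -> ~~ e x y) (independent e A).
Proof.
apply: (iffP forall_inP) => [H x y xA yA | H x xA].
  by move: (H x xA) => /forall_inP; apply.
by apply/forall_inP => y yA; apply: H.
Qed.

Lemma ext_max (S : {set T}) : independent e S ->
  exists M, maximal_independent e M && (S \subset M).
Proof.
move=> iS.
have P0 : independent e S && (S \subset S) by rewrite iS subxx.
case: (@arg_maxnP _ S (fun A : {set T} => independent e A && (S \subset A)) (fun A : {set T} => #|A|) P0) => M /andP[iM sM] Hmax.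
exists M; rewrite sM andbT /maximal_independent iM /=.
apply/forallP => z; apply/implyP => zM; apply/negP => iz.
have := Hmax (z |: M); rewrite iz (subset_trans sM (subsetUr _ _)) => /(_ isT).
by rewrite /geq cardsU1 zM /= ltnn.
Qed.

Lemma le_indep_dom M : maximal_independent e M -> indep_domination e <= #|M|.
Proof.
move=> mM; rewrite /indep_domination.
have : M \in index_enum (finset_set_of__canonical__fintype_Finite T) by rewrite mem_index_enum.
elim: (index_enum _) => [|A s IH] //; rewrite big_cons inE; case/orP => [/eqP<-| /IH H].
  by rewrite mM geq_minl.
by case: ifP => // _; apply: leq_trans (geq_minr _ _) H.
Qed.

Lemma le_alpha K : independent e K -> #|K| <= alpha e.
Proof. by move=> iK; rewrite /alpha; apply: (@leq_bigmax_cond _ (fun A : {set T} => independent e A) (fun A : {set T} => #|A|) K iK). Qed.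

Lemma e_neq (H : irreflexive e) p q : e p q -> p != q.
Proof. by move=> epq; apply/eqP => E; move: epq; rewrite E H. Qed.

Lemma tri (H : irreflexive e) (G : girth_ge e 6) p q r :
  e p q -> e q r -> e r p -> False.
Proof.
move=> pq qr rp.
have := G [:: p; q; r]; rewrite /= pq qr rp /= !inE !negb_or.
rewrite (e_neq H pq) (e_neq H qr) eq_sym (e_neq H rp) => /(_ isT isT isT).
by [].
Qed.

Lemma cyc4 (H : irreflexive e) (G : girth_ge e 6) p q r s :
  e p q -> e q r -> e r s -> e s p -> p != r -> q != s -> False.
Proof.
move=> pq qr rs sp pr qs.
have := G [:: p; q; r; s]; rewrite /= pq qr rs sp /= !inE !negb_or.
rewrite (e_neq H pq) (e_neq H qr) (e_neq H rs) pr qs eq_sym (e_neq H sp).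
by move=> /(_ isT isT isT).
Qed.

Lemma cyc5 (H : irreflexive e) (G : girth_ge e 6) p q r s t :
  e p q -> e q r -> e r s -> e s t -> e t p ->
  p != r -> p != s -> q != s -> q != t -> r != t -> False.
Proof.
move=> pq qr rs st tp pr ps qs qt rt.
have := G [:: p; q; r; s; t]; rewrite /= pq qr rs st tp /= !inE !negb_or.
rewrite (e_neq H pq) (e_neq H qr) (e_neq H rs) (e_neq H st) pr ps qs qt rt.
by rewrite eq_sym (e_neq H tp) => /(_ isT isT isT).
Qed.

End Helpers.

Theorem lemma13 (T : finType) (e : rel T) :
  simple_graph e -> girth_ge e 6 -> almost_well_covered e ->
  forall x y : T, of_type e 2 x -> of_type e 0 y -> ~~ e x y.
Proof.
move=> [esym eirr] G awc x y tx ty.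
apply/negP => exy.
have eyx : e y x by rewrite esym.
move: tx; rewrite /of_type /= andbF /= => /andP[/andP[nUx dx] c2].
case/orP: ty => [/andP[Uy _] | /andP[/andP[nUy dy] c0]].
  by move: nUx; rewrite (U_edge eyx Uy).
have nU_nb u v : e u v -> ~~ in_U e u -> ~~ in_U e v.
  move=> euv nu; apply/negP => Uv; have evu : e v u by rewrite esym.
  by move: nu; rewrite (U_edge evu Uv).
have leaf_nb l m : leaf e l -> e l m -> e l x -> m = x.
  case/andP=> nUl /cards1P [c Hc] elm elx.
  have : m \in [set z | e l z & ~~ in_U e z] by rewrite inE elm (nU_nb l).
  have : x \in [set z | e l z & ~~ in_U e z] by rewrite inE elx nUx.
  by rewrite Hc !inE => /eqP -> /eqP ->.
case/cards2P: c2 => a [b [nab Hab]].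
have : a \in [set z | e x z & leaf e z] by rewrite Hab !inE eqxx.
rewrite inE => /andP[exa la].
have : b \in [set z | e x z & leaf e z] by rewrite Hab !inE eqxx orbT.
rewrite inE => /andP[exb lb].
have eax : e a x by rewrite esym.
have ebx : e b x by rewrite esym.
pose wf z := odflt z [pick w | e z w && (w != y)].
have wP z : e y z -> e z (wf z) && (wf z != y).
  move=> eyz.
  have nlz : ~~ leaf e z.
    apply/negP => lz.
    have : z \in [set z | e y z & leaf e z] by rewrite inE eyz lz.
    by rewrite (cards0_eq (eqP c0)) inE.
  have nUz : ~~ in_U e z by apply: (nU_nb y).
  move: nlz; rewrite /leaf nUz /= => dz.
  have ezy : e z y by rewrite esym.
  have yin : y \in [set v | e z v & ~~ in_U e v] by rewrite inE ezy nUy.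
  have : 0 < #|[set v | e z v & ~~ in_U e v] :\ y|.
    move: dz; rewrite /degGU (cardsD1 y) yin; case: #|_ :\ y| => //.
  rewrite card_gt0 => /set0Pn [w]; rewrite !inE => /andP[nwy /andP[ezw _]].
  rewrite /wf; case: pickP => [w' /andP[-> ->] //| /(_ w)].
  by rewrite ezw nwy.
pose Z := [set z | e y z & z != x].
pose S := x |: [set wf z | z in Z].
have xw z : z \in Z -> ~~ e x (wf z).
  rewrite inE => /andP[eyz nzx]; apply/negP => exw.
  case/andP: (wP z eyz) => ezw nwy.
  have ewx : e (wf z) x by rewrite esym.
  by apply: (cyc4 eirr G exy eyz ezw ewx); rewrite // eq_sym.
have ww z1 z2 : z1 \in Z -> z2 \in Z -> ~~ e (wf z1) (wf z2).
  rewrite !inE => /andP[eyz1 _] /andP[eyz2 _]; apply/negP => e12.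
  case/andP: (wP z1 eyz1) => ez1w nw1y.
  case/andP: (wP z2 eyz2) => ez2w nw2y.
  have ew2z2 : e (wf z2) z2 by rewrite esym.
  have ez2y : e z2 y by rewrite esym.
  have nz12 : z1 != z2 by apply/eqP => E; move: e12; rewrite E eirr.
  have nw12 : wf z1 != wf z2 by apply: (e_neq eirr e12).
  have ez1y : e z1 y by rewrite esym.
  apply: (cyc5 eirr G eyz1 ez1w e12 ew2z2 ez2y).
  - by rewrite eq_sym.
  - by rewrite eq_sym.
  - apply/eqP => E; apply: (tri eirr G eyz1 _ ez2y).
    by rewrite E.
  - exact: nz12.
  - apply/eqP => E; apply: (tri eirr G eyz2 _ ez1y).
    by rewrite esym -E.
have iS : independent e S.
  apply/indepP => u v; rewrite !inE => /orP[/eqP-> | /imsetP[z1 z1Z ->]] /orP[/eqP-> | /imsetP[z2 z2Z ->]].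
  - by rewrite eirr.
  - exact: xw.
  - by rewrite esym xw.
  - exact: ww.
case: (ext_max iS) => M /andP[mM sSM].
have iM : independent e M by case/andP: mM.
have xM : x \in M by apply: (subsetP sSM); rewrite !inE eqxx.
have yM m : m \in M -> e y m -> m = x.
  move=> mM' eym; apply/eqP; apply/negPn/negP => nmx.
  have mZ : m \in Z by rewrite inE eym nmx.
  have wM : wf m \in M by apply: (subsetP sSM); rewrite !inE (imset_f _ mZ) orbT.
  by case/andP: (wP m eym) => emw _; move: (indepP _ _ iM m (wf m) mM' wM); rewrite emw.
have aM : a \notin M by apply/negP => aM; move: (indepP _ _ iM x a xM aM); rewrite exa.
have bM : b \notin M by apply/negP => bM; move: (indepP _ _ iM x b xM bM); rewrite exb.
have nyM : y \notin M by apply/negP => yM'; move: (indepP _ _ iM x y xM yM'); rewrite exy.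
have nay : a != y by apply/eqP => E; move: la; rewrite E /leaf (negbTE dy) andbF.
have nby : b != y by apply/eqP => E; move: lb; rewrite E /leaf (negbTE dy) andbF.
have nxy : x != y by apply: (e_neq eirr exy).
have nxa : x != a by apply: (e_neq eirr exa).
have nxb : x != b by apply: (e_neq eirr exb).
pose K := a |: (b |: (y |: (M :\ x))).
have cK : #|K| = #|M| + 2.
  rewrite !cardsU1 (cardsD1 x M) xM !inE (negbTE nab) (negbTE nay) (negbTE nby) (negbTE aM) (negbTE bM) (negbTE nyM) !andbF /=.
  by rewrite !add1n addn2.
have xK : x \notin K by rewrite !inE (negbTE nxa) (negbTE nxb) (negbTE nxy) eqxx.
have hleaf l v : leaf e l -> e l x -> v \in K -> e l v -> False.
  by move=> ll elx vK elv; move: xK; rewrite -(leaf_nb l v ll elv elx) vK.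
have hy v : v \in K -> e y v -> False.
  move=> vK eyv; move: (vK); rewrite !inE => /orP[/eqP E|/orP[/eqP E|/orP[/eqP E|/andP[vx vM]]]].
  - by apply: (hleaf a y la eax); rewrite ?inE ?eqxx ?orbT // esym -E.
  - by apply: (hleaf b y lb ebx); rewrite ?inE ?eqxx ?orbT // esym -E.
  - by move: eyv; rewrite E eirr.
  - by move: vx; rewrite (yM v vM eyv) eqxx.
have hm m v : m \in K -> v \in K -> e m v -> False.
  move=> mK vK emv; have evm : e v m by rewrite esym.
  move: (mK); rewrite !inE => /orP[/eqP E|/orP[/eqP E|/orP[/eqP E|/andP[mx mM']]]].
  - by apply: (hleaf a v la eax vK); rewrite -E.
  - by apply: (hleaf b v lb ebx vK); rewrite -E.
  - by apply: (hy v vK); rewrite -E.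
  move: (vK); rewrite !inE => /orP[/eqP E|/orP[/eqP E|/orP[/eqP E|/andP[vx vM]]]].
  - by apply: (hleaf a m la eax mK); rewrite -E.
  - by apply: (hleaf b m lb ebx mK); rewrite -E.
  - by apply: (hy m mK); rewrite -E.
  by move: (indepP _ _ iM m v mM' vM); rewrite emv.
have iK : independent e K by apply/indepP => u v uK vK; apply/negP; apply: hm.
have h1 := le_alpha iK.
have h2 := le_indep_dom mM.
move: awc; rewrite /almost_well_covered => awc.
move: h1; rewrite cK awc => h1.
have : #|M| + 2 <= #|M| + 1 by apply: leq_trans h1 _; rewrite leq_add2r.
by rewrite leq_add2l.
Qed.
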